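(* Let $a,b,g,h>0$ with $h>g+b+a$. Then the Minkowskian planar 4R linkage with these link lengths is of crank–superrocker type.
   Context: Link lengths: $a$ input crank, $b$ output crank, $g$ ground (fixed link), $h$ coupler. Put $T_1=g+b-h-a$, $T_2=a-g+b-h$, $T_3=g-a-b-h$, $T_4=g-a+b+h$, $T_5=a-h+g+b$. The input crank is a crank if $T_1T_2\ge0$ and $T_3T_4\le0$, a rocker if $T_1T_2<0$ and $T_3T_4\le0$, and a superrocker if $T_1T_2<0$ and $T_3T_4>0$. The output crank is a crank if $T_1\ge0$ and $T_4T_5\ge0$, a rocker if $T_1<0$ and $T_4T_5\ge0$, and a superrocker if $T_1<0$ and $T_4T_5<0$. The linkage is of type ''X–Y'' if its input crank is of type X and its output crank of type Y. *)

(* Defs.v *)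
From mathcomp Require Import all_boot all_order all_algebra.
Set Implicit Arguments. Unset Strict Implicit. Unset Printing Implicit Defensive.
Import Order.TTheory GRing.Theory Num.Theory.
Local Open Scope ring_scope.

Inductive crank_kind := Crank | Rocker | Superrocker.

Section Linkage.
Variable R : realFieldType.
(* a input crank, b output crank, g ground, h coupler *)
Definition T1 (a b g h : R) := g + b - h - a.
Definition T2 (a b g h : R) := a - g + b - h.
Definition T3 (a b g h : R) := g - a - b - h.
Definition T4 (a b g h : R) := g - a + b + h.
Definition T5 (a b g h : R) := a - h + g + b.

Definition input_kind (a b g h : R) (k : crank_kind) : Prop :=
  match k with
  | Crank => 0 <= T1 a b g h * T2 a b g h /\ T3 a b g h * T4 a b g h <= 0
  | Rocker => T1 a b g h * T2 a b g h < 0 /\ T3 a b g h * T4 a b g h <= 0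
  | Superrocker => T1 a b g h * T2 a b g h < 0 /\ 0 < T3 a b g h * T4 a b g h
  end.

Definition output_kind (a b g h : R) (k : crank_kind) : Prop :=
  match k with
  | Crank => 0 <= T1 a b g h /\ 0 <= T4 a b g h * T5 a b g h
  | Rocker => T1 a b g h < 0 /\ 0 <= T4 a b g h * T5 a b g h
  | Superrocker => T1 a b g h < 0 /\ T4 a b g h * T5 a b g h < 0
  end.

Definition linkage_type (a b g h : R) (X Y : crank_kind) : Prop :=
  input_kind a b g h X /\ output_kind a b g h Y.
End Linkage.

(* Main.v *)
Require Import Defs.
From mathcomp Require Import all_boot all_order all_algebra.
From mathcomp Require Import lra.
Import Order.TTheory GRing.Theory Num.Theory.
Local Open Scope ring_scope.

Theorem mainTheorem11 (R : realFieldType) (a b g h : R)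
  (ha : 0 < a) (hb : 0 < b) (hg : 0 < g) (hh : 0 < h)
  (hgt : g + b + a < h) :
  linkage_type a b g h Crank Superrocker.
Proof.
rewrite /linkage_type /= /T1 /T2 /T3 /T4 /T5.
have h1 : g + b - h - a < 0 by lra.
have h2 : a - g + b - h < 0 by lra.
have h3 : g - a - b - h < 0 by lra.
have h4 : 0 < g - a + b + h by lra.
have h5 : a - h + g + b < 0 by lra.
split; split.
- nra.
- nra.
- exact: h1.
- nra.
Qed.
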